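(* Let $X$ be a non-empty finite set and $\mathcal{P}$ a partition of $X$ such that $\mathcal{P}$ has exactly $m_i\ge 2$ blocks of size $n_i\ge 2$ for $i=1,\dots,p$ (the $n_i$ pairwise distinct), exactly one block of each of the sizes $l_1,\dots,l_q$ with each $l_i\ge 2$ (these sizes distinct from each other and from the $n_i$), and $t$ singleton blocks, and no other blocks ($p,q,t$ may be $0$). Then $$\operatorname{rank}(\Sigma(X,\mathcal{P}):S(X,\mathcal{P}))=p+q+g'(t)-1+l,$$ where $g'(0)=0$ and $g'(t)=1$ for $t\ge 1$, and $l$ is the number of values $s\ge 2$ such that $\mathcal{P}$ has a block of size $s$ but no block of size $s-1$.
   Context: $T(X,\mathcal{P})$ is the semigroup (under composition) of maps $f:X\to X$ such that for every block $P$ there is a block $Q$ with $Pf\subseteq Q$; $S(X,\mathcal{P})$ is its group of units (bijections in $T(X,\mathcal{P})$); $\Sigma(X,\mathcal{P})$ is the subsemigroup of $f\in T(X,\mathcal{P})$ whose image intersects every block. For a subsemigroup $U$ of a semigroup $V$, $\operatorname{rank}(V:U)$ is the least cardinality of a subset $W\subseteq V$ such that $U\cup W$ generates $V$ as a semigroup. *)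

(* Defs.v *)
From mathcomp Require Import all_boot.
Set Implicit Arguments. Unset Strict Implicit. Unset Printing Implicit Defensive.

Section Defs.
Variable X : finType.

(* maps act on the right: x (f g) = (x f) g *)
Definition compR (f g : {ffun X -> X}) : {ffun X -> X} := [ffun x => g (f x)].

Definition Tpart (P : {set {set X}}) : {set {ffun X -> X}} :=
  [set f : {ffun X -> X} | [forall B in P, exists C in P, (f @: B) \subset C]].

Definition Spart (P : {set {set X}}) : {set {ffun X -> X}} :=
  [set f : {ffun X -> X} in Tpart P | injectiveb f].

Definition Sigmapart (P : {set {set X}}) : {set {ffun X -> X}} :=
  [set f : {ffun X -> X} in Tpart P | [forall B in P, [exists x, f x \in B]]].

Inductive in_sg (A : {set {ffun X -> X}}) : {ffun X -> X} -> Prop :=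
  | sg_base f : f \in A -> in_sg A f
  | sg_comp f g : in_sg A f -> in_sg A g -> in_sg A (compR f g).

Definition generates (A V : {set {ffun X -> X}}) : Prop :=
  forall f, f \in V <-> in_sg A f.

Definition is_relrank (V U : {set {ffun X -> X}}) (r : nat) : Prop :=
  (exists2 W : {set {ffun X -> X}}, W \subset V & #|W| = r /\ generates (U :|: W) V) /\
  (forall W : {set {ffun X -> X}}, W \subset V -> generates (U :|: W) V -> r <= #|W|).

Definition nblocks (P : {set {set X}}) (s : nat) : nat := #|[set B in P | #|B| == s]|.

Definition lcount (P : {set {set X}}) : nat :=
  count (fun s => (0 < nblocks P s) && (nblocks P s.-1 == 0)) (iota 2 #|X|).
End Defs.

(* Main.v *)
Require Import Defs.
From mathcomp Require Import all_boot zify.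
Set Implicit Arguments. Unset Strict Implicit. Unset Printing Implicit Defensive.

Section Basics.
Variable X : finType.
Variable P : {set {set X}}.
Hypothesis hP : partition P [set: X].

Lemma hcov : cover P = [set: X].
Proof. by case/and3P: hP => /eqP. Qed.
Lemma htriv : trivIset P.
Proof. by case/and3P: hP. Qed.
Lemma hnz : set0 \notin P.
Proof. by case/and3P: hP. Qed.

Definition blk (x : X) := pblock P x.

Lemma blk_mem x : blk x \in P.
Proof. by apply: pblock_mem; rewrite hcov inE. Qed.
Lemma mem_blk x : x \in blk x.
Proof. by rewrite /blk mem_pblock hcov inE. Qed.
Lemma blk_eq B x : B \in P -> x \in B -> blk x = B.
Proof. by move=> BP xB; apply: def_pblock htriv BP xB. Qed.
Lemma blk_ne B : B \in P -> exists x, x \in B.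
Proof.
move=> BP; have: B != set0 by apply: contraNneq hnz => <-.
by case/set0Pn => x; exists x.
Qed.
Lemma blk_same x y : y \in blk x -> blk y = blk x.
Proof. by move=> h; apply: blk_eq (blk_mem x) h. Qed.

Lemma tpartP (f : {ffun X -> X}) :
  f \in Tpart P <-> (forall x y, blk x = blk y -> blk (f x) = blk (f y)).
Proof.
split.
- rewrite inE => /forallP H x y exy.
  have := H (blk x); rewrite blk_mem /= => /existsP [C /andP [CP sub]].
  have fx : f x \in C by apply: (subsetP sub); apply: imset_f; apply: mem_blk.
  have fy : f y \in C by apply: (subsetP sub); apply: imset_f; rewrite exy mem_blk.
  by rewrite (blk_eq CP fx) (blk_eq CP fy).
- move=> H; rewrite inE; apply/forallP => B; apply/implyP => BP.
  have [x xB] := blk_ne BP.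
  apply/existsP; exists (blk (f x)); rewrite blk_mem /=.
  apply/subsetP => _ /imsetP [y yB ->].
  rewrite (H x y); first exact: mem_blk.
  by rewrite (blk_eq BP xB) (blk_eq BP yB).
Qed.

Lemma tpart_sub (f : {ffun X -> X}) x B :
  f \in Tpart P -> B \in P -> x \in B -> f @: B \subset blk (f x).
Proof.
move=> /tpartP H BP xB; apply/subsetP => _ /imsetP [y yB ->].
rewrite (H x y); first exact: mem_blk.
by rewrite (blk_eq BP xB) (blk_eq BP yB).
Qed.

Lemma sigmaP (f : {ffun X -> X}) :
  f \in Sigmapart P <-> f \in Tpart P /\ (forall y, exists x, blk (f x) = blk y).
Proof.
rewrite inE; split.
- case/andP => -> /forallP H; split => // y.
  have := H (blk y); rewrite blk_mem /= => /existsP [x fx].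
  by exists x; apply: blk_eq (blk_mem y) fx.
- case=> -> H; apply/forallP => B; apply/implyP => BP.
  have [y yB] := blk_ne BP; have [x ex] := H y.
  apply/existsP; exists x; rewrite -(blk_eq BP yB) -ex; exact: mem_blk.
Qed.

Lemma sigma_blkinj (f : {ffun X -> X}) x y :
  f \in Sigmapart P -> blk (f x) = blk (f y) -> blk x = blk y.
Proof.
move=> /sigmaP [Tf Sf] exy.
pose ch (B : {set X}) := odflt x [pick z in B].
have chB B : B \in P -> ch B \in B.
  move=> BP; rewrite /ch; case: pickP => //= H.
  by have [z zB] := blk_ne BP; move: (H z); rewrite zB.
pose tau B := blk (f (ch B)).
have tauE B z : B \in P -> z \in B -> tau B = blk (f z).
  move=> BP zB; rewrite /tau; apply: (proj1 (tpartP f) Tf).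
  by rewrite (blk_eq BP zB) (blk_eq BP (chB B BP)).
have sub1 : tau @: P \subset P.
  by apply/subsetP => _ /imsetP [B _ ->]; apply: blk_mem.
have sub2 : P \subset tau @: P.
  apply/subsetP => C CP; have [w wC] := blk_ne CP.
  have [z ez] := Sf w; apply/imsetP; exists (blk z); first exact: blk_mem.
  by rewrite (tauE _ z (blk_mem z) (mem_blk z)) ez (blk_eq CP wC).
have eqP' : tau @: P = P by apply/eqP; rewrite eqEsubset sub1 sub2.
have /imset_injP inj : #|tau @: P| == #|P| by rewrite eqP'.
apply: inj; rewrite ?blk_mem //.
by rewrite (tauE _ x (blk_mem x) (mem_blk x)) (tauE _ y (blk_mem y) (mem_blk y)).
Qed.

Lemma spart_inj (f : {ffun X -> X}) : f \in Spart P -> injective f.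
Proof. by rewrite inE => /andP [_ /injectiveP]. Qed.
Lemma spart_tpart (f : {ffun X -> X}) : f \in Spart P -> f \in Tpart P.
Proof. by rewrite inE => /andP []. Qed.

Lemma spart_sigma (f : {ffun X -> X}) : f \in Spart P -> f \in Sigmapart P.
Proof.
move=> fS; apply/sigmaP; split; first exact: spart_tpart.
move=> y; have /codomP [x ->] := injF_onto (spart_inj fS) y.
by exists x.
Qed.

Lemma compRE (f g : {ffun X -> X}) x : compR f g x = g (f x).
Proof. by rewrite /compR ffunE. Qed.

Lemma tpart_comp (f g : {ffun X -> X}) :
  f \in Tpart P -> g \in Tpart P -> compR f g \in Tpart P.
Proof.
move=> /tpartP Hf /tpartP Hg; apply/tpartP => x y exy.
by rewrite !compRE; apply: Hg; apply: Hf.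
Qed.

Lemma sigma_comp (f g : {ffun X -> X}) :
  f \in Sigmapart P -> g \in Sigmapart P -> compR f g \in Sigmapart P.
Proof.
move=> /sigmaP [Tf Sf] /sigmaP [Tg Sg]; apply/sigmaP; split.
  exact: tpart_comp.
move=> y; have [z ez] := Sg y; have [x ex] := Sf z.
exists x; rewrite compRE -ez; apply: (proj1 (tpartP g) Tg); exact: ex.
Qed.

Lemma in_sg_sigma (A : {set {ffun X -> X}}) f :
  A \subset Sigmapart P -> in_sg A f -> f \in Sigmapart P.
Proof.
move=> sA; elim=> [g gA | g h _ Hg _ Hh]; first exact: (subsetP sA).
exact: sigma_comp.
Qed.

Definition nX := #|X|.
Definition rk (f : {ffun X -> X}) := #|f @: [set: X]|.

Lemma rk_le f : rk f <= #|X|.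
Proof. by rewrite /rk -cardsT; apply: leq_imset_card. Qed.

Lemma rk_compl f g : rk (compR f g) <= rk f.
Proof.
rewrite /rk.
have -> : compR f g @: [set: X] = g @: (f @: [set: X]).
  by rewrite -imset_comp; apply: eq_imset => x; rewrite compRE.
exact: leq_imset_card.
Qed.

Lemma rk_compr f g : rk (compR f g) <= rk g.
Proof.
rewrite /rk; apply: subset_leq_card; apply/subsetP => _ /imsetP [x _ ->].
by rewrite compRE; apply: imset_f.
Qed.

Lemma rk_loss1 f (B : {set X}) : rk f + #|B| <= nX + #|f @: B|.
Proof.
rewrite /rk /nX.
have -> : [set: X] = ~: B :|: B by rewrite setUC setUCr.
rewrite imsetU.
have h1 := leq_card_setU (f @: ~: B) (f @: B).
have h2 := leq_imset_card f (~: B).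
have h3 := cardsC B.
case: h1 => h1 _. lia.
Qed.

Lemma rk_loss2 f (B0 B1 : {set X}) : [disjoint B0 & B1] ->
  rk f + #|B0| + #|B1| <= nX + #|f @: B0| + #|f @: B1|.
Proof.
move=> dis; rewrite /rk /nX.
have -> : [set: X] = ~: (B0 :|: B1) :|: (B0 :|: B1) by rewrite setUC setUCr.
rewrite !imsetU.
have h1 := leq_card_setU (f @: ~: (B0 :|: B1)) (f @: B0 :|: f @: B1).
have h1' := leq_card_setU (f @: B0) (f @: B1).
have h2 := leq_imset_card f (~: (B0 :|: B1)).
have h3 := cardsC (B0 :|: B1).
have h4 := cardsUI B0 B1.
move: dis; rewrite -setI_eq0 => /eqP h5; rewrite h5 cards0 in h4.
case: h1 => h1 _; case: h1' => h1' _. lia.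
Qed.


Lemma in_sg_tpart (A : {set {ffun X -> X}}) f :
  A \subset Tpart P -> in_sg A f -> f \in Tpart P.
Proof.
move=> sA; elim=> [g gA | g h _ Hg _ Hh]; first exact: (subsetP sA).
exact: tpart_comp.
Qed.

Definition Dp a b (f : {ffun X -> X}) :=
  exists2 B, B \in P & b <= #|B| /\ exists2 C, C \in P & #|C| <= a /\ f @: B \subset C.
Definition Qp s (f : {ffun X -> X}) :=
  exists2 B, B \in P & #|B| = s /\
     exists x y, [/\ x \in B, y \in B, x != y & f x = f y].

Lemma lowD (A : {set {ffun X -> X}}) a b f :
  (forall B, B \in P -> a < #|B| -> b <= #|B|) ->
  A \subset Tpart P -> in_sg A f -> Dp a b f ->
  exists2 w, w \in A & Dp a b w /\ rk f <= rk w.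
Proof.
move=> Hgap sA; elim=> [g gA | g h Ig IHg Ih IHh] Dg.
  by exists g.
have Tg := in_sg_tpart sA Ig; have Th := in_sg_tpart sA Ih.
case: Dg => B BP [bB [C CP [Ca sub]]].
have [x xB] := blk_ne BP.
have sg := tpart_sub Tg BP xB.
case: (leqP #|blk (g x)| a) => hB'.
  have [w wA [Dw rw]] : exists2 w, w \in A & Dp a b w /\ rk g <= rk w.
    apply: IHg; exists B => //; split => //; exists (blk (g x)) => //.
    exact: blk_mem.
  by exists w => //; split => //; apply: leq_trans (rk_compl g h) rw.
have bB' := Hgap _ (blk_mem (g x)) hB'.
have [w wA [Dw rw]] : exists2 w, w \in A & Dp a b w /\ rk h <= rk w.
  apply: IHh; exists (blk (g x)); first exact: blk_mem.
  split => //; exists C => //; split => //.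
  have hx : h (g x) \in C by rewrite -compRE; apply: (subsetP sub); apply: imset_f.
  rewrite -(blk_eq CP hx); exact: tpart_sub Th (blk_mem _) (mem_blk _).
by exists w => //; split => //; apply: leq_trans (rk_compr g h) rw.
Qed.

Lemma lt_imset_card (f : X -> X) (A : {set X}) x y :
  x \in A -> y \in A -> x != y -> f x = f y -> #|f @: A| < #|A|.
Proof.
move=> xA yA nxy fxy; rewrite ltn_neqAle leq_imset_card andbT.
apply/negP => /imset_injP inj.
by move: nxy; rewrite (inj x y xA yA fxy) eqxx.
Qed.

Lemma lowQ (A : {set {ffun X -> X}}) s f :
  A \subset Sigmapart P -> in_sg A f -> #|X| <= rk f + 1 -> Qp s f ->
  exists2 w, w \in A & Qp s w /\ #|X| <= rk w + 1.
Proof.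
move=> sA; elim=> [g gA | g h Ig IHg Ih IHh] rf Qf.
  by exists g.
have Sg := in_sg_sigma sA Ig; have Sh := in_sg_sigma sA Ih.
have Tg : g \in Tpart P by move: Sg; rewrite inE => /andP [].
case: Qf => B BP [sB [x [y [xB yB nxy exy]]]].
rewrite !compRE in exy.
case: (eqVneq (g x) (g y)) => gxy.
  have [w wA [Qw rw]] : exists2 w, w \in A & Qp s w /\ #|X| <= rk w + 1.
    apply: IHg; first by apply: leq_trans rf _; rewrite leq_add2r; exact: rk_compl.
    by exists B => //; split => //; exists x, y.
  by exists w.
have rkg : rk g = #|X|.
  apply/eqP; rewrite eqn_leq rk_le /=; apply: contraLR rf; rewrite -!ltnNge => hlt.
  have : rk (compR g h) < rk g.
    rewrite /rk.
    have -> : compR g h @: [set: X] = h @: (g @: [set: X]).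
      by rewrite -imset_comp; apply: eq_imset => z; rewrite compRE.
    by apply: (lt_imset_card (x := g x) (y := g y)) => //; apply: imset_f.
  move=> HH; rewrite addn1; exact: leq_ltn_trans HH hlt.
have gonto : g @: [set: X] = [set: X].
  by apply/eqP; rewrite eqEcard subsetT cardsT /=; move: rkg; rewrite /rk => ->.
have ginj : injective g.
  move=> u v euv; have /imset_injP inj : #|g @: [set: X]| == #|[set: X]|.
    by rewrite gonto.
  by apply: inj; rewrite ?inE.

have sgC := tpart_sub Tg BP xB.
have CgB : (blk (g x)) \subset g @: B.
  apply/subsetP => c cC.
  have : c \in g @: [set: X] by rewrite gonto inE.
  case/imsetP => z _ ec; rewrite ec in cC *.
  have : blk z = blk x.
    by apply: (sigma_blkinj Sg); exact: (blk_same cC).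
  by rewrite (blk_eq BP xB) => ez; apply: imset_f; rewrite -ez mem_blk.
have cC : #|blk (g x)| = s.
  apply/eqP; rewrite eqn_leq; apply/andP; split.
    by rewrite -sB; apply: leq_trans (subset_leq_card CgB) (leq_imset_card _ _).
  by rewrite -sB -(card_imset B ginj); apply: subset_leq_card.
have [w wA [Qw rw]] : exists2 w, w \in A & Qp s w /\ #|X| <= rk w + 1.
  apply: IHh; first by apply: leq_trans rf _; rewrite leq_add2r; exact: rk_compr.
  exists (blk (g x)); first exact: blk_mem.
  split => //; exists (g x), (g y); split => //.
  - exact: mem_blk.
  - by apply: (subsetP sgC); apply: imset_f.
by exists w.
Qed.



Definition sz s := [exists B in P, #|B| == s].

Definition propi (i : nat * nat) (w : {ffun X -> X}) :=
  if i.1 == 0 then Qp i.2 w /\ nX <= rk w + 1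
  else Dp i.1 i.2 w /\ nX <= rk w + (i.2 - i.1).

Definition valid (i : nat * nat) :=
  if i.1 == 0 then [/\ 2 <= i.2, sz i.2 & ~~ sz i.2.-1]
  else [/\ i.1 < i.2, sz i.1, sz i.2 &
        forall B, B \in P -> i.1 < #|B| -> i.2 <= #|B|].

Lemma blk_dis B C : B \in P -> C \in P -> B != C -> [disjoint B & C].
Proof. by move=> BP CP nBC; apply: (trivIsetP htriv). Qed.

Lemma Dp_loss a b w : Dp a b w ->
  exists2 B, B \in P & b <= #|B| /\ #|w @: B| <= a.
Proof.
case=> B BP [bB [C CP [Ca sub]]]; exists B => //; split => //.
exact: leq_trans (subset_leq_card sub) Ca.
Qed.

Lemma Qp_loss s w : Qp s w -> exists2 B, B \in P & #|B| = s /\ #|w @: B| < s.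
Proof.
case=> B BP [sB [x [y [xB yB nxy exy]]]]; exists B => //; split => //.
by rewrite -sB; apply: (lt_imset_card xB yB nxy exy).
Qed.

Lemma propi_uniq i j w : valid i -> valid j -> propi i w -> propi j w -> i = j.
Proof.
case: i => a b; case: j => a' b'; rewrite /valid /propi /=.
have L1 := rk_loss1 w; have L2 := rk_loss2 w.
case: eqP => [-> | na]; case: eqP => [-> | na'].
- move=> [_ _ _] [_ _ _] [/Qp_loss [B BP [sB wB]] r1] [/Qp_loss [B' BP' [sB' wB']] _].
  case: (eqVneq B B') => [eB | nB].
    by subst B'; rewrite -sB -sB'.
  have := L2 _ _ (blk_dis BP BP' nB); lia.
- move=> [_ _ nsz] [ab sza _ _] [/Qp_loss [B BP [sB wB]] r1]
     [/Dp_loss [B0 BP0 [bB0 wB0]] r2].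
  case: (eqVneq B B0) => [eB | nB].
    subst B0.
    have := L1 B; move=> h.
    have eb : b = a'.+1 by lia.
    by move: nsz; rewrite eb /= sza.
  have := L2 _ _ (blk_dis BP BP0 nB); lia.
- move=> [ab sza _ _] [_ _ nsz] [/Dp_loss [B0 BP0 [bB0 wB0]] r2]
     [/Qp_loss [B BP [sB wB]] r1].
  case: (eqVneq B B0) => [eB | nB].
    subst B0.
    have := L1 B; move=> h.
    have eb : b' = a.+1 by lia.
    by move: nsz; rewrite eb /= sza.
  have := L2 _ _ (blk_dis BP BP0 nB); lia.
- move=> [ab _ _ _] [ab' _ _ _] [/Dp_loss [B0 BP0 [bB0 wB0]] r2]
     [/Dp_loss [B1 BP1 [bB1 wB1]] r3].
  case: (eqVneq B0 B1) => [eB | nB].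
    subst B1; have := L1 B0 => h.
    have -> : a = a' by lia.
    by have -> : b = b' by lia.
  have := L2 _ _ (blk_dis BP0 BP1 nB); lia.
Qed.


Definition eps (p q : X) : {ffun X -> X} := [ffun z => if z == p then q else z].
Definition tp (a b : X) : {ffun X -> X} :=
  [ffun z => if z == a then b else if z == b then a else z].
Definition swap2 (B C : {set X}) (al be : X -> X) : {ffun X -> X} :=
  [ffun z => if z \in B then al z else if z \in C then be z else z].
Definition tr (d : X) (B C : {set X}) (z : X) := nth d (enum C) (index z (enum B)).

Lemma tr_mem d (B C : {set X}) z : d \in C -> tr d B C z \in C.
Proof.
move=> dC; rewrite /tr; case: (ltnP (index z (enum B)) (size (enum C))) => h.
  by rewrite -mem_enum; apply: mem_nth.
by rewrite nth_default.
Qed.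

Lemma tr_inv d d' (B C : {set X}) z : z \in B -> #|B| <= #|C| -> tr d' C B (tr d B C z) = z.
Proof.
move=> zB le; rewrite /tr.
have i1 : index z (enum B) < size (enum C).
  by rewrite -cardE; apply: leq_trans le; rewrite cardE index_mem mem_enum.
by rewrite index_uniq ?enum_uniq // nth_index ?mem_enum.
Qed.

Lemma tr_inj d (B C : {set X}) : #|B| <= #|C| -> {in B &, injective (tr d B C)}.
Proof.
move=> le x y xB yB e.
by rewrite -(tr_inv d d xB le) e (tr_inv d d yB le).
Qed.

Lemma disj_nin (B C : {set X}) z : B \in P -> C \in P -> B != C -> z \in B -> z \notin C.
Proof.
move=> BP CP nBC zB; apply/negP => zC.
by move: nBC; rewrite -(blk_eq BP zB) -(blk_eq CP zC) eqxx.
Qed.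

Lemma in_blk (B : {set X}) z : B \in P -> (z \in B) = (blk z == B).
Proof.
move=> BP; apply/idP/eqP => [zB | <-]; first exact: blk_eq.
exact: mem_blk.
Qed.

Section Gen.
Variable W : {set {ffun X -> X}}.
Let A := Spart P :|: W.
Local Notation G := (in_sg A).

Lemma G_S f : f \in Spart P -> G f.
Proof. by move=> fS; apply: sg_base; rewrite inE fS. Qed.
Lemma G_W f : f \in W -> G f.
Proof. by move=> fW; apply: sg_base; rewrite inE fW orbT. Qed.
Lemma G_comp f g : G f -> G g -> G (compR f g).
Proof. exact: sg_comp. Qed.

Lemma spart_intro (f : {ffun X -> X}) :
  (forall x y, blk x = blk y -> blk (f x) = blk (f y)) -> injective f ->
  f \in Spart P.
Proof.
by move=> H inj; rewrite inE; apply/andP; split; [apply/tpartP | apply/injectiveP].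
Qed.

Lemma eps_conj u p q : u \in Spart P -> (forall z, u (u z) = z) ->
  G (eps p q) -> G (eps (u p) (u q)).
Proof.
move=> uS uK Ge.
have -> : eps (u p) (u q) = compR (compR u (eps p q)) u.
  apply/ffunP => z; rewrite !compRE !ffunE.
  case: (eqVneq z (u p)) => [-> | nz]; first by rewrite uK eqxx.
  have -> : (u z == p) = false.
    by apply/negbTE; apply: contra nz => /eqP <-; rewrite uK.
  by rewrite uK.
by apply: G_comp; [apply: G_comp; [apply: G_S | ] | apply: G_S].
Qed.

Lemma tpK a b z : tp a b (tp a b z) = z.
Proof.
rewrite !ffunE; case: (eqVneq z a) => [-> | na].
  by rewrite eqxx; case: eqP => // ->.
case: (eqVneq z b) => [-> | nb]; first by rewrite eqxx.
by rewrite (negbTE na) (negbTE nb).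
Qed.

Lemma tp_S a b : blk a = blk b -> tp a b \in Spart P.
Proof.
move=> eab; apply: spart_intro; last exact: can_inj (tpK a b).
have bl z : blk (tp a b z) = blk z.
  rewrite ffunE; case: (eqVneq z a) => [-> // | na].
  by case: (eqVneq z b) => [-> // | nb].
by move=> x y exy; rewrite !bl.
Qed.

Lemma tpL a b : tp a b a = b. Proof. by rewrite ffunE eqxx. Qed.
Lemma tpD a b z : z != a -> z != b -> tp a b z = z.
Proof. by move=> na nb; rewrite ffunE (negbTE na) (negbTE nb). Qed.

Definition bsw (B C : {set X}) d1 d2 := swap2 B C (tr d1 B C) (tr d2 C B).

Lemma bsw_K (B C : {set X}) d1 d2 z : B \in P -> C \in P -> B != C -> #|B| = #|C| ->
  d1 \in C -> d2 \in B -> bsw B C d1 d2 (bsw B C d1 d2 z) = z.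
Proof.
move=> BP CP nBC eBC d1C d2B.
have [zB | zB] := boolP (z \in B).
  have h : tr d1 B C z \in C by apply: tr_mem.
  have E1 : bsw B C d1 d2 z = tr d1 B C z by rewrite /bsw ffunE zB.
  rewrite E1 /bsw ffunE (negbTE (disj_nin CP BP _ h)) ?h; last by rewrite eq_sym.
  by apply: tr_inv => //; rewrite eBC.
have [zC | zC] := boolP (z \in C); last by rewrite /bsw !ffunE (negbTE zB) (negbTE zC) (negbTE zB) (negbTE zC).
have h : tr d2 C B z \in B by apply: tr_mem.
have E1 : bsw B C d1 d2 z = tr d2 C B z by rewrite /bsw ffunE (negbTE zB) zC.
by rewrite E1 /bsw ffunE h; apply: tr_inv => //; rewrite eBC.
Qed.

Lemma bsw_blk (B C : {set X}) d1 d2 z : B \in P -> C \in P -> d1 \in C -> d2 \in B ->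
  blk (bsw B C d1 d2 z) = if z \in B then C else if z \in C then B else blk z.
Proof.
move=> BP CP d1C d2B; rewrite /bsw ffunE.
case: ifP => zB; first by apply: blk_eq => //; apply: tr_mem.
by case: ifP => zC //; apply: blk_eq => //; apply: tr_mem.
Qed.

Lemma bsw_S (B C : {set X}) d1 d2 : B \in P -> C \in P -> B != C -> #|B| = #|C| ->
  d1 \in C -> d2 \in B -> bsw B C d1 d2 \in Spart P.
Proof.
move=> BP CP nBC eBC d1C d2B; apply: spart_intro; last first.
  exact: can_inj (fun z => bsw_K z BP CP nBC eBC d1C d2B).
move=> x y exy; rewrite !bsw_blk // !(in_blk _ BP) !(in_blk _ CP) exy.
by case: ifP => // _; case: ifP.
Qed.

Lemma eps_all :
  (forall s, 2 <= s -> sz s -> exists p q,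
      [/\ p != q, blk p = blk q, #|blk p| = s & G (eps p q)]) ->
  forall p q, p != q -> blk p = blk q -> G (eps p q).
Proof.
move=> H p q npq epq.
have s2 : 2 <= #|blk p|.
  have := cards2 p q; rewrite npq => <-; apply: subset_leq_card; apply/subsetP => z.
  by rewrite !inE => /orP [] /eqP ->; [apply: mem_blk | rewrite epq; apply: mem_blk].
have szs : sz #|blk p| by apply/existsP; exists (blk p); rewrite blk_mem eqxx.
have [p0 [q0 [npq0 epq0 s0 G0]]] := H _ s2 szs.
have [p1 [q1 [npq1 [p1B q1B] G1]]] : exists p1 q1,
    [/\ p1 != q1, p1 \in blk p /\ q1 \in blk p & G (eps p1 q1)].
  case: (eqVneq (blk p0) (blk p)) => [e | ne].
    exists p0, q0; split => //; rewrite -e; split; first exact: mem_blk.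
    by rewrite epq0; exact: mem_blk.
  pose u := bsw (blk p0) (blk p) p p0.
  have uS : u \in Spart P.
    by apply: bsw_S; rewrite ?blk_mem ?mem_blk.
  have uK z : u (u z) = z by apply: bsw_K; rewrite ?blk_mem ?mem_blk.
  exists (u p0), (u q0); split.
  - by apply: contra npq0 => /eqP /(can_inj uK) ->.
  - have hp0 : p0 \in blk p0 by apply: mem_blk.
    have hq0 : q0 \in blk p0 by rewrite epq0; apply: mem_blk.
    rewrite !(in_blk _ (blk_mem p)) /u !bsw_blk ?blk_mem ?mem_blk // ?hp0 ?hq0.
    by rewrite eqxx.
  - exact: eps_conj.
pose t1 := tp p1 p.
have t1S : t1 \in Spart P.
  by apply: tp_S; rewrite (blk_same p1B).
have G2 : G (eps p (t1 q1)).
  by rewrite -{1}(tpL p1 p); apply: eps_conj => //; apply: tpK.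
have nq : t1 q1 != p.
  by apply: contra npq1 => /eqP; rewrite -{1}(tpL p1 p) => /(can_inj (tpK p1 p)) ->.
pose t2 := tp (t1 q1) q.
have t2S : t2 \in Spart P.
  apply: tp_S; rewrite -epq.
  have : t1 q1 \in blk p.
    rewrite /t1 ffunE; case: ifP => _; first exact: mem_blk.
    by case: ifP => _ //; rewrite -(blk_same p1B).
  by move/blk_same.
have := eps_conj (p := p) (q := t1 q1) t2S (tpK _ _) G2.
rewrite /t2 tpL tpD //; by rewrite eq_sym.
Qed.


Definition internal (h : {ffun X -> X}) := forall x, blk (h x) = blk x.

Lemma rk_leX f : rk f <= nX.
Proof. exact: rk_le. Qed.

Lemma internal_step h x x' : internal h -> x != x' -> h x = h x' ->
  exists h', [/\ internal h', rk h < rk h' & h = compR (eps x x') h'].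
Proof.
move=> hint nxx hxx.
have ex' : blk x' = blk x by rewrite -hint -hxx hint.
have sub : h @: blk x \subset blk x.
  apply/subsetP => _ /imsetP [z zB ->]; rewrite -(blk_same zB) -hint; exact: mem_blk.
have lt : #|h @: blk x| < #|blk x|.
  apply: (lt_imset_card (x := x) (y := x')) => //; first exact: mem_blk.
  by rewrite -ex'; exact: mem_blk.
have : ~~ (blk x \subset h @: blk x).
  by apply/negP => /subset_leq_card; rewrite leqNgt lt.
case/subsetPn => y yB ny.
have nyT : y \notin h @: [set: X].
  apply/imsetP => -[z _ ez]; move/imsetP: ny; apply; exists z => //.
  by rewrite -(blk_same yB) ez hint mem_blk.
pose h' : {ffun X -> X} := [ffun z => if z == x then y else h z].
exists h'; split.
- move=> z; rewrite ffunE; case: eqP => [-> | _]; last exact: hint.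
  exact: blk_same yB.
- rewrite /rk; apply: leq_trans (_ : #|y |: h @: [set: X]| <= _).
    by rewrite cardsU1 nyT.
  apply: subset_leq_card; apply/subsetP => z; rewrite in_setU1 => /orP [/eqP -> | ].
    by apply/imsetP; exists x; rewrite ?inE // ffunE eqxx.
  case/imsetP => z' _ ->; case: (eqVneq z' x) => [-> | nz].
    apply/imsetP; exists x'; rewrite ?inE // ffunE eq_sym (negbTE nxx).
    by rewrite hxx.
  by apply/imsetP; exists z'; rewrite ?inE // ffunE (negbTE nz).
- apply/ffunP => z; rewrite compRE !ffunE; case: (eqVneq z x) => [-> | nz].
    by rewrite eq_sym (negbTE nxx).
  by rewrite (negbTE nz).
Qed.

Lemma internal_G :
  (forall p q, p != q -> blk p = blk q -> G (eps p q)) ->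
  forall h, internal h -> G h.
Proof.
move=> Heps.
suff H : forall m h, nX - rk h <= m -> internal h -> G h.
  by move=> h; apply: (H _ h (leqnn _)).
elim=> [|m IH] h hm hint;
  (case: (pickP (fun pr : X * X => (pr.1 != pr.2) && (h pr.1 == h pr.2)))
     => [[x x'] /= /andP [nxx /eqP hxx] | noinj]).
- have [h' [i' lt e]] := internal_step hint nxx hxx.
  have := rk_leX h'; lia.
- apply: G_S; apply: spart_intro; first by move=> u v euv; rewrite !hint.
  move=> u v euv; apply/eqP; apply: contraT => nuv.
  by have := noinj (u, v); rewrite /= nuv euv eqxx.
- have [h' [i' lt e]] := internal_step hint nxx hxx.
  rewrite e; apply: G_comp.
    apply: Heps => //; rewrite -hint hxx hint //.
  by apply: IH i'; lia.
- apply: G_S; apply: spart_intro; first by move=> u v euv; rewrite !hint.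
  move=> u v euv; apply/eqP; apply: contraT => nuv.
  by have := noinj (u, v); rewrite /= nuv euv eqxx.
Qed.


Lemma swap2_B (B C : {set X}) (al be : X -> X) z : z \in B -> swap2 B C al be z = al z.
Proof. by move=> zB; rewrite ffunE zB. Qed.
Lemma swap2_C (B C : {set X}) (al be : X -> X) z : z \notin B -> z \in C -> swap2 B C al be z = be z.
Proof. by move=> zB zC; rewrite ffunE (negbTE zB) zC. Qed.
Lemma swap2_o (B C : {set X}) (al be : X -> X) z : z \notin B -> z \notin C -> swap2 B C al be z = z.
Proof. by move=> zB zC; rewrite ffunE (negbTE zB) (negbTE zC). Qed.

Definition Full (B C : {set X}) := forall al be : X -> X,
  (forall x, x \in B -> al x \in C) -> (forall y, y \in C -> be y \in B) ->
  G (swap2 B C al be).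

Hypothesis Heps : forall p q, p != q -> blk p = blk q -> G (eps p q).

Lemma kgen (B C : {set X}) (al' be' : X -> X) : B \in P -> C \in P -> B != C ->
  (forall x, x \in B -> al' x \in C) -> {in B &, injective al'} ->
  (forall y, y \in C -> be' y \in B) ->
  (forall x, x \in B -> exists2 y, y \in C & be' y = x) ->
  G (swap2 B C al' be') -> Full B C.
Proof.
move=> BP CP nBC alC' inj beB onto G0 al be alC beB2.
have [b0 b0B] := blk_ne BP; have [c0 c0C] := blk_ne CP.
pose li y := odflt b0 [pick x in B | al' x == y].
pose sec x := odflt c0 [pick y in C | be' y == x].
have li_mem y : li y \in B by rewrite /li; case: pickP => [x /andP [] | ].
have li_al x : x \in B -> li (al' x) = x.
  move=> xB; rewrite /li; case: pickP => [x' /andP [x'B /eqP e] | none] /=.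
    exact: inj.
  by have := none x; rewrite xB eqxx.
have sec_mem x : sec x \in C by rewrite /sec; case: pickP => [y /andP [] | ].
have sec_be x : x \in B -> be' (sec x) = x.
  move=> xB; rewrite /sec; case: pickP => [y /andP [_ /eqP] // | none].
  by have [y yC ey] := onto x xB; have := none y; rewrite yC ey eqxx.
pose h1 : {ffun X -> X} := [ffun z => if z \in C then sec (be z) else z].
pose h2 : {ffun X -> X} := [ffun z => if z \in C then al (li z) else z].
have i1 : internal h1.
  move=> z; rewrite ffunE; case: ifP => // zC.
  by rewrite (blk_eq CP zC); apply: blk_eq.
have i2 : internal h2.
  move=> z; rewrite ffunE; case: ifP => // zC.
  by rewrite (blk_eq CP zC); apply: blk_eq => //; apply: alC.
have -> : swap2 B C al be = compR (compR h1 (swap2 B C al' be')) h2.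
  apply/ffunP => z; rewrite !compRE.
  have [zB | zB] := boolP (z \in B).
    have zC := disj_nin BP CP nBC zB.
    rewrite swap2_B // [h1 z]ffunE (negbTE zC) swap2_B // ffunE.
    rewrite alC' //.
    by rewrite li_al.
  have [zC | zC] := boolP (z \in C).
    have sC := sec_mem (be z).
    rewrite swap2_C // [h1 z]ffunE zC swap2_C //; last first.
      by apply: disj_nin CP BP _ sC; rewrite eq_sym.
    rewrite sec_be; last exact: beB2.
    rewrite ffunE (negbTE (disj_nin BP CP nBC (beB2 _ zC))) //.
  rewrite (swap2_o _ _ zB zC) [h1 z]ffunE (negbTE zC) (swap2_o _ _ zB zC).
  by rewrite ffunE (negbTE zC).
by apply: G_comp; [apply: G_comp => // | ]; apply: internal_G.
Qed.


Lemma Full_eq (B C : {set X}) : B \in P -> C \in P -> B != C -> #|B| = #|C| ->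
  Full B C.
Proof.
move=> BP CP nBC eBC.
have [d1 d1C] := blk_ne CP; have [d2 d2B] := blk_ne BP.
apply: (kgen (al' := tr d1 B C) (be' := tr d2 C B)) => //.
- by move=> x _; apply: tr_mem.
- by apply: tr_inj; rewrite eBC.
- by move=> y _; apply: tr_mem.
- move=> x xB; exists (tr d1 B C x); first exact: tr_mem.
  by apply: tr_inv => //; rewrite eBC.
- by apply: G_S; apply: bsw_S.
Qed.

Lemma Full_sym (B C : {set X}) : B \in P -> C \in P -> B != C -> Full B C -> Full C B.
Proof.
move=> BP CP nBC F al be alB beC.
have -> : swap2 C B al be = swap2 B C be al.
  apply/ffunP => z; have [zB | zB] := boolP (z \in B).
    rewrite (swap2_B _ _ _ zB) swap2_C //.
    by apply: disj_nin BP CP nBC zB.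
  have [zC | zC] := boolP (z \in C).
    by rewrite (swap2_B _ _ _ zC) swap2_C.
  by rewrite !swap2_o.
exact: F.
Qed.

Lemma Full_trans (B C D : {set X}) : B \in P -> C \in P -> D \in P ->
  B != C -> C != D -> B != D -> #|B| <= #|C| -> #|C| <= #|D| ->
  Full B C -> Full C D -> Full B D.
Proof.
move=> BP CP DP nBC nCD nBD lBC lCD FBC FCD.
have [dB dBB] := blk_ne BP; have [dC dCC] := blk_ne CP; have [dD dDD] := blk_ne DP.
pose s1 := swap2 C D (tr dD C D) (tr dC D C).
pose s2 := swap2 B C (tr dC B C) (tr dB C B).
have G1 : G s1 by apply: FCD => ? _; apply: tr_mem.
have G2 : G s2 by apply: FBC => ? _; apply: tr_mem.
pose al' z := tr dD C D (tr dC B C z).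
pose be' z := tr dB C B (tr dC D C z).
have eK : swap2 B D al' be' = compR (compR s1 s2) s1.
  apply/ffunP => z; rewrite !compRE.
  have [zB | zB] := boolP (z \in B).
    have zC := disj_nin BP CP nBC zB; have zD := disj_nin BP DP nBD zB.
    have hC : tr dC B C z \in C by apply: tr_mem.
    rewrite (swap2_B _ _ _ zB) /s1 (swap2_o _ _ zC zD) /s2 (swap2_B _ _ _ zB).
    by rewrite (swap2_B _ _ _ hC).
  have [zD | zD] := boolP (z \in D).
    have zC : z \notin C by apply: disj_nin DP CP _ zD; rewrite eq_sym.
    have hC : tr dC D C z \in C by apply: tr_mem.
    have hB : tr dB C B (tr dC D C z) \in B by apply: tr_mem.
    have hBC := disj_nin BP CP nBC hB; have hBD := disj_nin BP DP nBD hB.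
    have hCB : tr dC D C z \notin B by apply: disj_nin CP BP _ hC; rewrite eq_sym.
    rewrite (swap2_C _ _ zB zD) /s1 (swap2_C _ _ zC zD) /s2 (swap2_C _ _ hCB hC).
    by rewrite (swap2_o _ _ hBC hBD).
  have [zC | zC] := boolP (z \in C).
    have hD : tr dD C D z \in D by apply: tr_mem.
    have hDB : tr dD C D z \notin B by apply: disj_nin DP BP _ hD; rewrite eq_sym.
    have hDC : tr dD C D z \notin C by apply: disj_nin DP CP _ hD; rewrite eq_sym.
    rewrite (swap2_o _ _ zB zD) /s1 (swap2_B _ _ _ zC) /s2 (swap2_o _ _ hDB hDC).
    by rewrite (swap2_C _ _ hDC hD) tr_inv.
  by rewrite (swap2_o _ _ zB zD) /s1 (swap2_o _ _ zC zD) /s2 (swap2_o _ _ zB zC)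
             (swap2_o _ _ zC zD).
apply: (kgen (al' := al') (be' := be')) => //.
- by move=> x _; apply: tr_mem.
- move=> x y xB yB; rewrite /al' => e.
  apply: (tr_inj lBC xB yB); apply: (tr_inj lCD _ _ e); exact: tr_mem.
- by move=> y _; apply: tr_mem.
- move=> x xB; exists (al' x); first exact: tr_mem.
  rewrite /be' /al' tr_inv //; last exact: tr_mem.
  by rewrite tr_inv.
- by rewrite eK; apply: G_comp => //; apply: G_comp.
Qed.


Hypothesis Hcut : forall a b, 0 < a -> a < b -> sz a -> sz b ->
  (forall B, B \in P -> a < #|B| -> b <= #|B|) ->
  exists A0 C0 (al be : X -> X), [/\ A0 \in P, C0 \in P, #|A0| = a, #|C0| = b &
     [/\ (forall x, x \in A0 -> al x \in C0), (forall y, y \in C0 -> be y \in A0),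
         (forall x, x \in A0 -> be (al x) = x) & G (swap2 A0 C0 al be)]].

Lemma neq_card (B C : {set X}) : #|B| != #|C| -> B != C.
Proof. by apply: contra => /eqP ->. Qed.

Lemma Full_lt (BB CC : {set X}) : BB \in P -> CC \in P -> #|BB| < #|CC| -> Full BB CC.
Proof.
suff H : forall m (B C : {set X}), #|C| - #|B| <= m -> B \in P -> C \in P ->
    #|B| < #|C| -> Full B C.
  by move=> BP CP lt; apply: (H _ BB CC (leqnn _)).
elim=> [|m IH] B C hm BP CP lt; first by lia.
case: (pickP (fun M : {set X} => (M \in P) && (#|B| < #|M|) && (#|M| < #|C|)))
  => [M /andP [/andP [MP l1] l2] | none].
  apply: (Full_trans BP MP CP).
  - by apply: neq_card; rewrite neq_ltn l1.
  - by apply: neq_card; rewrite neq_ltn l2.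
  - by apply: neq_card; rewrite neq_ltn lt.
  - exact: ltnW.
  - exact: ltnW.
  - by apply: IH => //; lia.
  - by apply: IH => //; lia.
have Bpos : 0 < #|B| by have [x xB] := blk_ne BP; apply/card_gt0P; exists x.
have [A0 [C0 [al [be [A0P C0P cA cC [alC beA beal GA]]]]]] :
    exists A0 C0 (al be : X -> X), [/\ A0 \in P, C0 \in P, #|A0| = #|B|, #|C0| = #|C| &
     [/\ (forall x, x \in A0 -> al x \in C0), (forall y, y \in C0 -> be y \in A0),
         (forall x, x \in A0 -> be (al x) = x) & G (swap2 A0 C0 al be)]].
  apply: Hcut => //.
  - by apply/existsP; exists B; rewrite BP eqxx.
  - by apply/existsP; exists C; rewrite CP eqxx.
  - move=> K KP lK; have := none K; rewrite KP lK /= => /negbT; rewrite -leqNgt.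
    done.
have nAC : A0 != C0 by apply: neq_card; rewrite cA cC neq_ltn lt.
have FA : Full A0 C0.
  apply: (kgen (al' := al) (be' := be)) => //.
  - by move=> x y xA yA e; rewrite -(beal x xA) e beal.
  - by move=> x xA; exists (al x); [apply: alC | apply: beal].
have FB : Full B C0.
  case: (eqVneq B A0) => [-> // | nBA].
  apply: (Full_trans BP A0P C0P) => //.
  - by apply: neq_card; rewrite cC neq_ltn lt.
  - by rewrite cA.
  - by rewrite cA cC ltnW.
  - by apply: Full_eq => //; rewrite cA.
case: (eqVneq C C0) => [-> // | nCC].
apply: (Full_trans BP C0P CP) => //.
- by apply: neq_card; rewrite cC neq_ltn lt.
- by rewrite eq_sym.
- by apply: neq_card; rewrite neq_ltn lt.
- by rewrite cC ltnW.
- by rewrite cC.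
- by apply: (Full_eq C0P CP); [rewrite eq_sym | rewrite cC].
Qed.

Lemma Full_all (B C : {set X}) : B \in P -> C \in P -> B != C -> Full B C.
Proof.
move=> BP CP nBC; case: (ltngtP #|B| #|C|) => h.
- exact: Full_lt.
- by apply: Full_sym => //; [rewrite eq_sym | apply: Full_lt].
- exact: Full_eq.
Qed.


Definition moved (f : {ffun X -> X}) := [set B in P | ~~ (f @: B \subset B)].

Lemma step_move f : f \in Sigmapart P -> 0 < #|moved f| ->
  exists k f', [/\ G k, f' \in Sigmapart P, #|moved f'| < #|moved f| & f = compR k f'].
Proof.
move=> fS pos; have Tf : f \in Tpart P by move: fS; rewrite inE => /andP [].
have [B0 B0M] := card_gt0P pos.
case: (arg_maxnP (fun B : {set X} => #|B|) B0M) => B BM Bmax.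
have BM' : B \in moved f := BM.
have := BM'; rewrite inE => /andP [BP nsub].
have [x xB] := blk_ne BP.
have [C CP fxC] : exists2 C, C \in P & f x \in C.
  by exists (blk (f x)); [apply: blk_mem | apply: mem_blk].
have sfB : f @: B \subset C by rewrite -(blk_eq CP fxC); apply: tpart_sub.
have nBC : B != C.
  by apply/eqP => eBC; move: nsub; rewrite {2}eBC sfB.
have CM : C \in moved f.
  rewrite inE CP /=; apply/negP => sC.
  have ffx : f (f x) \in C by apply: (subsetP sC); apply: imset_f.
  have H : blk (f x) = blk x.
    by apply: (sigma_blkinj fS); rewrite (blk_eq CP ffx) (blk_eq CP fxC).
  by move/eqP: nBC; apply; rewrite -(blk_eq BP xB) -H (blk_eq CP fxC).
have CB : #|C| <= #|B| := Bmax C CM.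
pose FC := f @: C.
have eFC : f (f x) \in FC by apply: imset_f.
have hFC : #|FC| <= #|B| by apply: leq_trans (leq_imset_card _ _) CB.
have FCsub : FC \subset blk (f (f x)) by apply: tpart_sub.
pose k := swap2 B C f (fun y => tr x FC B (f y)).
have Gk : G k.
  apply: Full_all => //.
  - by move=> z zB; apply: (subsetP sfB); apply: imset_f.
  - by move=> z _; apply: tr_mem.
pose f' : {ffun X -> X} :=
  [ffun z => if z \in C then z else if z \in B then tr (f (f x)) B FC z else f z].
have nCB : C != B by rewrite eq_sym.
have eq : f = compR k f'.
  apply/ffunP => z; rewrite compRE.
  have [zB | zB] := boolP (z \in B).
    have fzC : f z \in C by apply: (subsetP sfB); apply: imset_f.
    by rewrite /k (swap2_B _ _ _ zB) ffunE fzC.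
  have [zC | zC] := boolP (z \in C).
    have wB : tr x FC B (f z) \in B by apply: tr_mem.
    rewrite /k (swap2_C _ _ zB zC) ffunE (negbTE (disj_nin BP CP nBC wB)) wB.
    by rewrite tr_inv //; apply: imset_f.
  by rewrite /k (swap2_o _ _ zB zC) ffunE (negbTE zC) (negbTE zB).
have bl z : blk (f' z) =
    if z \in C then C else if z \in B then blk (f (f x)) else blk (f z).
  rewrite ffunE; case: ifP => zC; first exact: blk_eq.
  case: ifP => // zB.
  apply: blk_same; apply: (subsetP FCsub); exact: tr_mem.
have f'S : f' \in Sigmapart P.
  apply/sigmaP; split.
    apply/tpartP => u v euv; rewrite !bl !(in_blk _ CP) !(in_blk _ BP) euv.
    case: ifP => // _; case: ifP => // _; exact: (proj1 (tpartP f) Tf).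
  move=> y; have [z ez] := (proj2 (proj1 (sigmaP f) fS)) y.
  by exists (k z); rewrite -compRE -eq.
exists k, f'; split => //.
have sub : moved f' \subset moved f :\ C.
  apply/subsetP => K; rewrite inE => /andP [KP nsK].
  have nKC : K != C.
    apply/eqP => eKC; move: nsK; rewrite eKC; apply/negP/negPn.
    by apply/subsetP => _ /imsetP [z zC ->]; rewrite ffunE zC.
  rewrite !inE nKC /=.
  case: (eqVneq K B) => [-> | nKB]; first by rewrite BP.
  rewrite KP /=; apply: contra nsK.
  have -> : f' @: K = f @: K.
    apply: eq_in_imset => z zK.
    have zB := disj_nin KP BP nKB zK; have zC := disj_nin KP CP nKC zK.
    by rewrite ffunE (negbTE zC) (negbTE zB).
  done.
apply: leq_ltn_trans (subset_leq_card sub) _.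
by have := cardsD1 C (moved f); rewrite CM add1n => ->.
Qed.

Lemma main_gen f0 : f0 \in Sigmapart P -> G f0.
Proof.
suff H : forall m f, #|moved f| <= m -> f \in Sigmapart P -> G f.
  by move=> fS; apply: (H _ f0 (leqnn _)).
elim=> [|m IH] f hm fS; case: (posnP #|moved f|) => [h0 | pos].
- apply: internal_G => // x.
  have : blk x \notin moved f by apply/negP => h; move: h0; rewrite (cardD1 (blk x)) h.
  rewrite inE blk_mem /= negbK => sub.
  by apply: blk_same; apply: (subsetP sub); apply: imset_f; apply: mem_blk.
- by move: hm; rewrite leqNgt pos.
- apply: internal_G => // x.
  have : blk x \notin moved f by apply/negP => h; move: h0; rewrite (cardD1 (blk x)) h.
  rewrite inE blk_mem /= negbK => sub.
  by apply: blk_same; apply: (subsetP sub); apply: imset_f; apply: mem_blk.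
- have [k [f' [Gk f'S lt e]]] := step_move fS pos.
  rewrite e; apply: G_comp => //; apply: IH => //; lia.
Qed.

End Gen.


Definition gform (i : nat * nat) (w : {ffun X -> X}) :=
  if i.1 == 0 then exists p q, [/\ p != q, blk p = blk q, #|blk p| = i.2 & w = eps p q]
  else exists A0 C0 (al be : X -> X),
    [/\ A0 \in P, C0 \in P, #|A0| = i.1, #|C0| = i.2 &
     [/\ (forall x, x \in A0 -> al x \in C0), (forall y, y \in C0 -> be y \in A0),
         (forall x, x \in A0 -> be (al x) = x) & w = swap2 A0 C0 al be]].

Lemma szP s : reflect (exists2 B, B \in P & #|B| = s) (sz s).
Proof.
apply: (iffP existsP) => [[B /andP [BP /eqP e]] | [B BP e]]; first by exists B.
by exists B; rewrite BP e eqxx.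
Qed.

Lemma internal_sigma h : internal h -> h \in Sigmapart P.
Proof.
move=> hi; apply/sigmaP; split; last by move=> y; exists y.
by apply/tpartP => x y exy; rewrite !hi.
Qed.

Lemma gen_exists i : valid i -> exists w, [/\ w \in Sigmapart P, propi i w & gform i w].
Proof.
case: i => a b; rewrite /valid /propi /gform /=.
case: eqP => [_ | na].
  case=> b2 /szP [B BP cB] _.
  have [p pB] := blk_ne BP.
  have : ~~ (B \subset [set p]).
    by apply/negP => /subset_leq_card; rewrite cards1 cB; case: b b2 {cB} => [|[|]].
  case/subsetPn => q qB; rewrite inE => npq; rewrite eq_sym in npq.
  have ebp : blk p = B by apply: blk_eq.
  have ebq : blk q = B by apply: blk_eq.
  exists (eps p q); split.
  - apply: internal_sigma => z; rewrite ffunE; case: eqP => // ->.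
    by rewrite ebp ebq.
  - split.
      exists B => //; split => //; exists p, q; split => //.
      by rewrite !ffunE eqxx eq_sym (negbTE npq).
    rewrite /rk; apply: leq_trans (_ : #|[set~ p]| + 1 <= _).
      by rewrite cardsC1 /nX addn1 prednK //; apply/card_gt0P; exists p.
    rewrite leq_add2r; apply: subset_leq_card; apply/subsetP => z.
    rewrite !inE => nz; apply/imsetP; exists z; rewrite ?inE //.
    by rewrite ffunE (negbTE nz).
  - by exists p, q; split => //; rewrite ?ebp ?ebq.
case=> ab /szP [A0 A0P cA] /szP [C0 C0P cC] gap.
have [a0 a0A] := blk_ne A0P; have [c0 c0C] := blk_ne C0P.
have nAC : A0 != C0 by apply/eqP => e; move: cA cC; rewrite e => -> ?; lia.
pose al := tr c0 A0 C0; pose be := tr a0 C0 A0.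
have alC x : al x \in C0 by apply: tr_mem.
have beA y : be y \in A0 by apply: tr_mem.
have beal x : x \in A0 -> be (al x) = x.
  by move=> xA; apply: tr_inv => //; rewrite cA cC ltnW.
pose e := swap2 A0 C0 al be.
have ebl z : blk (e z) = if z \in A0 then C0 else if z \in C0 then A0 else blk z.
  rewrite ffunE; case: ifP => _; first exact: blk_eq.
  by case: ifP => _ //; apply: blk_eq.
exists e; split.
- apply/sigmaP; split.
    apply/tpartP => x y exy; rewrite !ebl !(in_blk _ A0P) !(in_blk _ C0P) exy.
    by case: ifP => // _; case: ifP.
  move=> y; case: (boolP (y \in A0)) => yA.
    exists c0; rewrite ebl (negbTE (disj_nin C0P A0P _ c0C)) ?c0C ?(blk_eq A0P yA) //.
    by rewrite eq_sym.
  case: (boolP (y \in C0)) => yC.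
    by exists a0; rewrite ebl a0A (blk_eq C0P yC).
  by exists y; rewrite ebl (negbTE yA) (negbTE yC).
- split.
    exists C0 => //; split; first by rewrite cC.
    exists A0 => //; split; first by rewrite cA.
    apply/subsetP => _ /imsetP [z zC ->].
    by rewrite /e (swap2_C _ _ (disj_nin C0P A0P _ zC) zC) // eq_sym.
  have s1 : ~: C0 :|: al @: A0 \subset e @: [set: X].
    apply/subsetP => z; rewrite !inE => /orP [zC | ].
      case: (boolP (z \in A0)) => zA.
        apply/imsetP; exists (al z); rewrite ?inE //.
        rewrite /e (swap2_C _ _ _ (alC z)) ?beal //.
        by apply: disj_nin C0P A0P _ (alC z); rewrite eq_sym.
      by apply/imsetP; exists z; rewrite ?inE // /e swap2_o.
    case/imsetP => x xA ->; apply/imsetP; exists x; rewrite ?inE //.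
    by rewrite /e swap2_B.
  have s2 : #|~: C0 :|: al @: A0| = nX - b + a.
    rewrite cardsU.
    have -> : ~: C0 :&: al @: A0 = set0.
      apply/setP => z; rewrite !inE; apply/negP => /andP [zC /imsetP [x _ ex]].
      by move: zC; rewrite ex alC.
    rewrite cards0 subn0 card_in_imset; last first.
      by move=> x y xA yA exy; rewrite -(beal x xA) exy beal.
    have := cardsC C0; rewrite cA cC /nX; lia.
  have s3 : b <= nX.
    rewrite -cC /nX; apply: max_card.
  have := subset_leq_card s1; rewrite s2 /rk; lia.
- exists A0, C0, al, be; split => //.
Qed.


Section Assemble.
Variable W : {set {ffun X -> X}}.
Hypothesis HW : forall i, valid i -> exists2 w, w \in W & gform i w.
Local Notation G := (in_sg (Spart P :|: W)).

Lemma Heps_of : forall p q, p != q -> blk p = blk q -> G (eps p q).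
Proof.
apply: eps_all => s s2 szs.
case: (boolP (sz s.-1)) => h; last first.
  have vi : valid (0, s) by rewrite /valid /=; split.
  have [w' wW' gf] := HW vi.
  move: gf; rewrite /gform /= => -[p [q [npq epq cp ew]]].
  by exists p, q; split => //; rewrite -ew; apply: G_W.
have vi : valid (s.-1, s).
  rewrite /valid /=; have -> : (s.-1 == 0) = false by case: s s2 {szs h} => [|[|]].
  split => //; first by case: s s2 {szs h} => [|[|]].
  by move=> B _ lt; lia.
have [w wW gf] := HW vi.
move: gf; rewrite /gform /=; have -> : (s.-1 == 0) = false by case: s s2 {szs h vi wW} => [|[|]].
move=> [A0 [C0 [al [be [A0P C0P cA cC [alC beA beal ew]]]]]].
have nAC : A0 != C0 by apply/eqP => e; move: cA cC; rewrite e => ->; lia.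
have injal : {in A0 &, injective al}.
  by move=> x y xA yA exy; rewrite -(beal x xA) exy beal.
have sub : al @: A0 \subset C0 by apply/subsetP => _ /imsetP [x xA ->]; apply: alC.
have : ~~ (C0 \subset al @: A0).
  apply/negP => /subset_leq_card; rewrite card_in_imset // cA cC; lia.
case/subsetPn => z zC nz.
have sub2 : C0 :\ z \subset al @: A0.
  have h1 : al @: A0 \subset C0 :\ z.
    apply/subsetP => y yi; rewrite !inE (subsetP sub _ yi) andbT.
    by apply: contra nz => /eqP <-.
  have : #|C0 :\ z| <= #|al @: A0|.
    by rewrite card_in_imset // cA; have := cardsD1 z C0; rewrite zC cC; lia.
  by move=> le; have /eqP -> : al @: A0 == C0 :\ z by rewrite eqEcard h1 le.
set q := al (be z).
have qi : q \in al @: A0 by apply: imset_f; apply: beA.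
exists z, q; split.
- by apply: contra nz => /eqP ->.
- by rewrite (blk_eq C0P zC) (blk_eq C0P (subsetP sub _ qi)).
- by rewrite (blk_eq C0P zC).
have -> : eps z q = compR w w.
  apply/ffunP => y; rewrite compRE ew.
  have [yA | yA] := boolP (y \in A0).
    have yC := disj_nin A0P C0P nAC yA.
    have alA : al y \notin A0 by apply: disj_nin C0P A0P _ (alC y yA); rewrite eq_sym.
    rewrite (swap2_B _ _ _ yA) (swap2_C _ _ alA (alC y yA)) beal // ffunE.
    by case: eqP => // eyz; move: yC; rewrite eyz zC.
  have [yC | yC] := boolP (y \in C0).
    rewrite (swap2_C _ _ yA yC) (swap2_B _ _ _ (beA y yC)) ffunE.
    case: eqP => [-> // | nyz].
    have : y \in al @: A0 by apply: (subsetP sub2); rewrite !inE yC andbT; apply/eqP.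
    by case/imsetP => x xA ->; rewrite beal.
  by rewrite !(swap2_o _ _ yA yC) ffunE; case: eqP => // eyz; move: yC; rewrite eyz zC.
by apply: G_comp; apply: G_W.
Qed.


Lemma Hcut_of : forall a b, 0 < a -> a < b -> sz a -> sz b ->
  (forall B, B \in P -> a < #|B| -> b <= #|B|) ->
  exists A0 C0 (al be : X -> X), [/\ A0 \in P, C0 \in P, #|A0| = a, #|C0| = b &
     [/\ (forall x, x \in A0 -> al x \in C0), (forall y, y \in C0 -> be y \in A0),
         (forall x, x \in A0 -> be (al x) = x) & G (swap2 A0 C0 al be)]].
Proof.
move=> a b a0 ab sa sb gap.
have na : (a == 0) = false by case: a a0 {ab sa gap}.
have vi : valid (a, b) by rewrite /valid /= na; split.
have [w wW] := HW vi; rewrite /gform /= na.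
move=> [A0 [C0 [al [be [A0P C0P cA cC [alC beA beal ew]]]]]].
exists A0, C0, al, be; split => //; split => //.
by rewrite -ew; apply: G_W.
Qed.

Lemma gen_all f : f \in Sigmapart P -> G f.
Proof. exact: (main_gen Heps_of Hcut_of). Qed.

End Assemble.


Lemma Qp_notS s w : Qp s w -> w \notin Spart P.
Proof.
case=> B BP [_ [x [y [_ _ nxy exy]]]]; apply/negP => /spart_inj inj.
by move: nxy; rewrite (inj _ _ exy) eqxx.
Qed.

Lemma Dp_notS a b w : a < b -> Dp a b w -> w \notin Spart P.
Proof.
move=> ab /Dp_loss [B BP [bB wB]]; apply/negP => /spart_inj inj.
move: wB; rewrite card_imset //; lia.
Qed.

Lemma low_idx (W' : {set {ffun X -> X}}) i : W' \subset Sigmapart P ->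
  generates (Spart P :|: W') (Sigmapart P) -> valid i ->
  exists2 w, w \in W' & propi i w.
Proof.
move=> sW gen vi; have [g [gS pg _]] := gen_exists vi.
have sA : Spart P :|: W' \subset Sigmapart P.
  apply/subsetP => w; rewrite inE => /orP [/spart_sigma // | ]; exact: (subsetP sW).
have sT : Spart P :|: W' \subset Tpart P.
  by apply/subsetP => w /(subsetP sA); rewrite inE => /andP [].
have Ig := proj1 (gen g) gS.
move: vi pg; case: i => a b; rewrite /valid /propi /=.
case: eqP => [_ | na].
  move=> _ [Qg rg]; have [w wA [Qw rw]] := lowQ sA Ig rg Qg.
  exists w => //; move: wA; rewrite inE => /orP [wS | //].
  by move: wS; rewrite (negbTE (Qp_notS Qw)).
case=> ab _ _ gap [Dg rg].
have [w wA [Dw rw]] := lowD gap sT Ig Dg.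
exists w; last by split => //; apply: leq_trans rg _; rewrite leq_add2r.
move: wA; rewrite inE => /orP [wS | //].
by move: wS; rewrite (negbTE (Dp_notS ab Dw)).
Qed.

Lemma sz_pos s : sz s -> 0 < s.
Proof. by case/szP => B BP <-; have [x xB] := blk_ne BP; apply/card_gt0P; exists x. Qed.

Lemma sz_le s : sz s -> s <= #|X|.
Proof. by case/szP => B BP <-; apply: max_card. Qed.

Lemma sz_nb s : sz s = (0 < nblocks P s).
Proof.
apply/idP/idP => [/szP [B BP cB] | /card_gt0P [B]]; last first.
  by rewrite inE => /andP [BP /eqP cB]; apply/szP; exists B.
by apply/card_gt0P; exists B; rewrite inE BP cB eqxx.
Qed.

Definition pres := [seq s <- iota 1 #|X| | sz s].
Definition cols := [seq s <- iota 2 #|X| | sz s && ~~ sz s.-1].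

Lemma mem_pres s : (s \in pres) = sz s.
Proof.
rewrite mem_filter mem_iota; apply/andP/idP => [[] // | h]; split => //.
by rewrite sz_pos //= add1n ltnS sz_le.
Qed.

Lemma cols_valid s : s \in cols -> valid (0, s).
Proof.
rewrite mem_filter mem_iota => /andP [/andP [h1 h2] /andP [h3 _]].
by rewrite /valid /=; split.
Qed.

Lemma valid_cols s : valid (0, s) -> s \in cols.
Proof.
rewrite /valid /= => -[h1 h2 h3]; rewrite mem_filter h2 h3 mem_iota h1 /=.
by rewrite add2n ltnS; apply: leqW; apply: sz_le.
Qed.

Lemma valid_cut_uniq a a' b : 0 < a -> 0 < a' -> valid (a, b) -> valid (a', b) -> a = a'.
Proof.
move=> a0 a0'; rewrite /valid /=.
have -> : (a == 0) = false by case: a a0.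
have -> : (a' == 0) = false by case: a' a0'.
move=> [ab sa sb gap] [ab' sa' _ gap'].
case/szP: sa => B BP cB; case/szP: sa' => B' BP' cB'.
case: (ltngtP a a') => // h.
- by have := gap B' BP'; rewrite cB' => /(_ h); lia.
- by have := gap' B BP; rewrite cB => /(_ h); lia.
Qed.

End Basics.

Lemma choose_seq (T U : eqType) (Q : T -> U -> Prop) (L : seq T) :
  (forall i, i \in L -> exists w, Q i w) ->
  exists ws, size ws = size L /\ forall i w, (i, w) \in zip L ws -> Q i w.
Proof.
elim: L => [|i L IH] H; first by exists [::].
have [w Qw] := H i (mem_head _ _).
have [ws [sws Hws]] : exists ws, size ws = size L /\ forall i w, (i, w) \in zip L ws -> Q i w.
  by apply: IH => j jL; apply: H; rewrite inE jL orbT.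
exists (w :: ws); split; first by rewrite /= sws.
move=> j u; rewrite /= in_cons => /orP [/eqP [-> ->] // | ].
exact: Hws.
Qed.

Lemma zip_in1 (T U : eqType) (L : seq T) (ws : seq U) i w :
  (i, w) \in zip L ws -> i \in L.
Proof.
elim: L ws => [|j L IH] [|u ws] //=; rewrite ?in_cons => /orP [/eqP [-> _] | h].
  by rewrite eqxx.
by rewrite (IH _ h) orbT.
Qed.

Lemma zip_in2 (T U : eqType) (L : seq T) (ws : seq U) i w :
  (i, w) \in zip L ws -> w \in ws.
Proof.
elim: L ws => [|j L IH] [|u ws] //=; rewrite ?in_cons => /orP [/eqP [_ ->] | h].
  by rewrite eqxx.
by rewrite (IH _ h) orbT.
Qed.

Lemma zip_ex1 (T U : eqType) (L : seq T) (ws : seq U) i :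
  size ws = size L -> i \in L -> exists w, (i, w) \in zip L ws.
Proof.
elim: L ws => [|j L IH] [|u ws] //= [e]; rewrite ?in_cons => /orP [/eqP -> | h].
  by exists u; apply: mem_head.
by have [w hw] := IH ws e h; exists w; rewrite in_cons hw orbT.
Qed.

Lemma zip_ex2 (T U : eqType) (L : seq T) (ws : seq U) w :
  size ws = size L -> w \in ws -> exists i, (i, w) \in zip L ws.
Proof.
elim: L ws => [|j L IH] [|u ws] //= [e]; rewrite ?in_cons => /orP [/eqP -> | h].
  by exists j; apply: mem_head.
by have [i hi] := IH ws e h; exists i; rewrite in_cons hi orbT.
Qed.



Section Final.
Variable X : finType.
Variable P : {set {set X}}.
Hypothesis hP : partition P [set: X].

Lemma idx_exists : 0 < #|X| -> exists I : seq (nat * nat),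
  [/\ uniq I, (forall i, i \in I -> valid P i), (forall i, valid P i -> i \in I) &
      size I = size (cols P) + (size (pres P)).-1].
Proof.
move=> hX; case/card_gt0P: hX => x _.
have szx : sz P #|blk P x|.
  by apply/szP; exists (blk P x) => //; apply: blk_mem.
have : #|blk P x| \in pres P by rewrite (mem_pres hP).
have upres : uniq (pres P) by apply: filter_uniq; apply: iota_uniq.
have spres : sorted ltn (pres P).
  by apply: sorted_filter; [exact: ltn_trans | exact: iota_ltn_sorted].
have mp s : (s \in pres P) = sz P s := mem_pres hP s.
case E: (pres P) => [|m0 rest] // _.
rewrite E in spres upres.
have allgt : all (ltn m0) rest := order_path_min ltn_trans spres.
have urest : uniq rest by case/andP: upres.
have m0p : sz P m0 by rewrite -mp E mem_head.
have restp s : s \in rest -> sz P s by move=> h; rewrite -mp E in_cons h orbT.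
have m0le s : sz P s -> m0 <= s.
  rewrite -mp E in_cons => /orP [/eqP -> // | h].
  by apply: ltnW; apply: (allP allgt).
have cutex s : s \in rest -> exists a, valid P (a, s) /\ 0 < a.
  move=> sr; have lt : m0 < s := allP allgt s sr.
  have ex : exists a, sz P a && (a < s) by exists m0; rewrite m0p lt.
  have ub : forall a, sz P a && (a < s) -> a <= s by move=> a /andP [_ /ltnW].
  case: (ex_maxnP ex ub) => a /andP [sa las] amax.
  have a0 := sz_pos hP sa.
  exists a; split => //.
  rewrite /valid /=; have -> : (a == 0) = false by case: a a0 {sa las amax}.
  split => //; first exact: restp.
  move=> B BP lt'; rewrite leqNgt; apply/negP => h.
  have : sz P #|B| && (#|B| < s) by rewrite h andbT; apply/szP; exists B.
  by move/amax; rewrite leqNgt lt'.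
have [as_ [sas Has]] := choose_seq (Q := fun s a => valid P (a, s) /\ 0 < a) cutex.
exists ([seq (0, s) | s <- cols P] ++ [seq (p.2, p.1) | p <- zip rest as_]); split.
- rewrite cat_uniq; apply/and3P; split.
  + rewrite map_inj_uniq; first by apply: filter_uniq; apply: iota_uniq.
    by move=> u v [].
  + apply/hasPn => q /mapP [[u v] hp ->]; apply/negP => /mapP [s _ [e _]].
    by have := proj2 (Has _ _ hp); rewrite /= e.
  + rewrite map_inj_uniq; first exact: zip_uniql.
    by move=> [u1 u2] [v1 v2] [-> ->].
- move=> i; rewrite mem_cat => /orP [/mapP [s hs ->] | /mapP [[s a] hp ->]].
    exact: cols_valid.
  exact: (proj1 (Has _ _ hp)).
- case=> a b vi; rewrite mem_cat; apply/orP.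
  case: (eqVneq a 0) => [a0 | na].
    left; rewrite a0 in vi *; apply/mapP; exists b => //; exact: valid_cols.
  right; move: (vi); rewrite /valid /= (negbTE na) => -[ab sa sb gap].
  have br : b \in rest.
    have : b \in pres P by rewrite mp.
    rewrite E in_cons => /orP [/eqP eb | //].
    by have := m0le _ sa; rewrite -eb; lia.
  have [a' ha'] := zip_ex1 sas br.
  have [va' a0'] := Has _ _ ha'.
  have ea : a' = a by apply: (valid_cut_uniq hP a0' _ va' vi); rewrite lt0n.
  by apply/mapP; exists (b, a') => //; rewrite ea.
- by rewrite size_cat !size_map size_zip sas minnn /=.
Qed.


Lemma pres_size (ns ms ls : seq nat) (t : nat) :
  size ms = size ns ->
  uniq ns -> all (fun n => 2 <= n) ns -> all (fun m => 2 <= m) ms ->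
  uniq ls -> all (fun l => 2 <= l) ls -> all (fun l => l \notin ns) ls ->
  (forall i, i < size ns -> nblocks P (nth 0 ns i) = nth 0 ms i) ->
  (forall l, l \in ls -> nblocks P l = 1) ->
  nblocks P 1 = t ->
  (forall B, B \in P -> (#|B| \in ns) || (#|B| \in ls) || (#|B| == 1)) ->
  size (pres P) = size ns + size ls + (0 < t).
Proof.
move=> sms uns ans ams uls als lns hnb hls ht hB.
pose L := ns ++ ls ++ nseq (0 < t) 1.
have uL : uniq L.
  rewrite /L cat_uniq uns /= cat_uniq uls /=; apply/and3P; split.
  - rewrite has_cat negb_or; apply/andP; split.
      by apply/hasPn => l lL; apply: (allP lns).
    apply/hasPn => l; rewrite mem_nseq => /andP [_ /eqP ->].
    by apply/negP => /(allP ans).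
  - apply/hasPn => l; rewrite mem_nseq => /andP [_ /eqP ->].
    by apply/negP => /(allP als).
  - by case: (0 < t).
have upres : uniq (pres P) by apply: filter_uniq; apply: iota_uniq.
have eqL : pres P =i L.
  move=> s; rewrite (mem_pres hP) /L !mem_cat mem_nseq.
  apply/idP/idP.
  - case/szP => B BP <-; have := hB B BP; case/orP => [/orP [h | h] | /eqP e].
    + by rewrite h.
    + by rewrite h orbT.
    + apply/orP; right; apply/orP; right.
      have h1 : sz P 1 by apply/szP; exists B.
      by move: h1; rewrite sz_nb e ?eqxx ?andbT ht => ->.
  - case/orP => [h | /orP [h | /andP [t0 /eqP ->]]].
    + rewrite sz_nb; have ii : index s ns < size ns by rewrite index_mem.
      have := hnb _ ii; rewrite nth_index // => ->.
      have : nth 0 ms (index s ns) \in ms by apply: mem_nth; rewrite sms.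
      by move/(allP ams) => /= h2; apply: leq_trans h2.
    + by rewrite sz_nb hls.
    + by rewrite sz_nb ht; move: t0; case: (0 < t).
rewrite (perm_size (uniq_perm upres uL eqL)) /L !size_cat size_nseq addnA.
by [].
Qed.

Lemma lcount_cols : lcount P = size (cols P).
Proof.
rewrite /lcount /cols size_filter; apply: eq_count => s /=.
by rewrite !sz_nb !lt0n negbK.
Qed.

End Final.

Theorem corollary4p7 (X : finType) (P : {set {set X}})
    (ns ms ls : seq nat) (t : nat) :
  0 < #|X| ->
  partition P [set: X] ->
  size ms = size ns ->
  uniq ns -> all (fun n => 2 <= n) ns -> all (fun m => 2 <= m) ms ->
  uniq ls -> all (fun l => 2 <= l) ls -> all (fun l => l \notin ns) ls ->
  (forall i, i < size ns -> nblocks P (nth 0 ns i) = nth 0 ms i) ->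
  (forall l, l \in ls -> nblocks P l = 1) ->
  nblocks P 1 = t ->
  (forall B, B \in P -> (#|B| \in ns) || (#|B| \in ls) || (#|B| == 1)) ->
  is_relrank (Sigmapart P) (Spart P)
    (size ns + size ls + (0 < t) - 1 + lcount P).
Proof.
move=> hX hP sms uns ans ams uls als lns hnb hls ht hB.
have [I [uI vI cI sI]] := idx_exists hP hX.
have ps := pres_size hP sms uns ans ams uls als lns hnb hls ht hB.
have -> : size ns + size ls + (0 < t) - 1 + lcount P = size I.
  by rewrite sI lcount_cols -ps subn1 addnC.
have uniq_of (ws : seq {ffun X -> X}) (R : nat * nat -> {ffun X -> X} -> Prop) :
    size ws = size I -> (forall i w, (i, w) \in zip I ws -> propi P i w) -> uniq ws.
  move=> sws Hws.
  have <- : unzip2 (zip I ws) = ws by apply: unzip2_zip; rewrite sws.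
  rewrite map_inj_in_uniq ?zip_uniql //.
  move=> [i w] [i' w'] h h' /= ew; subst w'.
  by rewrite (propi_uniq hP (vI _ (zip_in1 h)) (vI _ (zip_in1 h')) (Hws _ _ h) (Hws _ _ h')).
split.
- have [ws [sws Hws]] := choose_seq
     (Q := fun i w => [/\ w \in Sigmapart P, propi P i w & gform P i w])
     (fun i hi => gen_exists hP (vI i hi)).
  have uws : uniq ws.
    by apply: (uniq_of ws (fun _ _ => True)) => // i w /Hws [].
  have Wsig : [set w in ws] \subset Sigmapart P.
    apply/subsetP => w; rewrite inE => wi; have [i hi] := zip_ex2 sws wi.
    by case: (Hws _ _ hi).
  exists [set w in ws] => //; split.
    by rewrite cardsE; move/card_uniqP: uws => ->.
  move=> f; split => [fS | Ig].
    apply: (gen_all hP _ fS) => i vi.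
    have [w hw] := zip_ex1 sws (cI i vi).
    exists w; first by rewrite inE; exact: zip_in2 hw.
    by case: (Hws _ _ hw).
  apply: (in_sg_sigma hP _ Ig); apply/subsetP => w; rewrite inE.
  case/orP => [/(spart_sigma hP) // | ]; exact: (subsetP Wsig).
- move=> W' sW gen.
  have [ws [sws Hws]] := choose_seq (Q := fun i w => w \in W' /\ propi P i w)
     (fun i hi => let: ex_intro2 w h1 h2 := low_idx hP sW gen (vI i hi)
                  in ex_intro _ w (conj h1 h2)).
  have uws : uniq ws.
    by apply: (uniq_of ws (fun _ _ => True)) => // i w /Hws [].
  rewrite -sws -(card_uniqP uws); apply: subset_leq_card; apply/subsetP => w wi.
  by have [i hi] := zip_ex2 sws wi; case: (Hws _ _ hi).
Qed.
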